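(* Let $G=G_n$ be a sequence of graphs on $n$ vertices that are $(\varepsilon_n,2)$-quasirandom with $\varepsilon_n=o(1)$, with density $\gamma=d(G)$ satisfying $\gamma=\Omega(1)$ and $1-\gamma=\Omega(1)$. Let $X,Y,Z$ be sets of ordered pairs of distinct vertices of $G$, where within each of $X$, $Y$, $Z$ the pairs are pairwise disjoint, and suppose $|X|,|Y|,|Z|=\Omega(n)$. Then there are at least $\gamma^{3}|X||Y||Z|/8-o(n^{3})$ choices of $(x_1,x_2)\in X$, $(y_1,y_2)\in Y$, $(z_1,z_2)\in Z$ such that $\{x_1,y_2\}$, $\{y_1,z_2\}$ and $\{z_1,x_2\}$ are all edges of $G$.
   Context: For a graph $G$ with $n$ vertices and $m$ edges, $d(G)=m/\binom n2$, and $G$ is $(\varepsilon,h)$-quasirandom if every set $A$ of at most $h$ vertices satisfies $\left|\bigcap_{w\in A}N_G(w)\right|=(1\pm\varepsilon)d(G)^{|A|}n$, where $x=1\pm\varepsilon$ means $1-\varepsilon\le x\le1+\varepsilon$. Asymptotics are as $n\to\infty$. *)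

(* Defs.v *)
From mathcomp Require Import all_boot all_order all_algebra.
Set Implicit Arguments. Unset Strict Implicit. Unset Printing Implicit Defensive.
Import Order.TTheory GRing.Theory Num.Theory.
Local Open Scope ring_scope.

Definition simple_graph (T : finType) (g : rel T) : Prop :=
  symmetric g /\ irreflexive g.

Definition edge_set (T : finType) (g : rel T) : {set {set T}} :=
  [set e : {set T} | [exists x : T, exists y : T,
      [&& x != y, g x y & e == [set x; y]]]].

Definition density (R : realFieldType) (T : finType) (g : rel T) : R :=
  (#|edge_set g|)%:R / ('C(#|T|, 2))%:R.

Definition nbhd (T : finType) (g : rel T) (w : T) : {set T} := [set v | g w v].

Definition quasirandom (R : realFieldType) (T : finType) (g : rel T)
    (eps : R) (h : nat) : Prop :=
  forall A : {set T}, (#|A| <= h)%N ->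
    (1 - eps) * density R g ^+ #|A| * (#|T|)%:R
      <= (#|\bigcap_(w in A) nbhd g w|)%:R
    /\ (#|\bigcap_(w in A) nbhd g w|)%:R
      <= (1 + eps) * density R g ^+ #|A| * (#|T|)%:R.

Definition disjoint_pairs (T : finType) (X : {set T * T}) : Prop :=
  (forall p, p \in X -> p.1 != p.2) /\
  (forall p q, p \in X -> q \in X -> p != q ->
     [disjoint [set p.1; p.2] & [set q.1; q.2]]).

(* number of (x,y,z) in X*Y*Z with x1~y2, y1~z2, z1~x2 *)
Definition triple_count (T : finType) (g : rel T) (X Y Z : {set T * T}) : nat :=
  #|[set t : (T * T) * (T * T) * (T * T) |
      [&& t.1.1 \in X, t.1.2 \in Y, t.2 \in Z,
          g t.1.1.1 t.1.2.2, g t.1.2.1 t.2.2 & g t.2.1 t.1.1.2]]|.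

(* Main.v *)
Require Import Defs.
From mathcomp Require Import all_boot all_order all_algebra.
From mathcomp Require Import reals.
From mathcomp Require Import ring lra.
Import Order.TTheory GRing.Theory Num.Theory.
Local Open Scope ring_scope.

Section Disc.
Variables (R : realFieldType) (T : finType) (g : rel T).

Lemma card_sum (P : pred T) : (#|[set a | P a]|)%:R = \sum_a ((P a)%:R : R).
Proof.
rewrite -sum1_card natr_sum big_mkcond /=; apply: eq_bigr => a _.
by rewrite inE; case: (P a).
Qed.

Lemma deg_eq (b : T) :
  (#|\bigcap_(w in [set b]) nbhd g w|)%:R = \sum_a ((g b a)%:R : R).
Proof.
rewrite big_set1 /nbhd card_sum; apply: eq_bigr => a _.
by [].
Qed.

Lemma codeg_eq (b b' : T) : b != b' ->
  (#|\bigcap_(w in [set b; b']) nbhd g w|)%:R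
    = \sum_a ((g b a)%:R * (g b' a)%:R : R).
Proof.
move=> nbb.
rewrite big_setU1 /=; last by rewrite in_set1.
rewrite big_set1.
have -> : nbhd g b :&: nbhd g b' = [set a | g b a && g b' a].
  by apply/setP => a; rewrite !inE.
rewrite card_sum; apply: eq_bigr => a _.
by case: (g b a); case: (g b' a); rewrite /= ?mulr1 ?mulr0 ?mul0r.
Qed.

Lemma sum_delta (b : T) (N : R) : \sum_b' ((b == b')%:R * N) = N.
Proof.
rewrite (bigD1 b) //= eqxx mul1r big1 ?addr0 // => b' nb.
by rewrite eq_sym (negbTE nb) mul0r.
Qed.

Lemma disc (eps d Mu Mv : R) (u v : T -> R) :
  symmetric g -> quasirandom g eps 2 -> 0 <= density R g -> density R g <= 1 ->
  0 <= Mu -> 0 < Mv -> 0 < d ->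
  (forall a, `|u a| <= Mu) -> (forall b, `|v b| <= Mv) ->
  3 * `|eps| * (#|T|)%:R + 1 <= d ^+ 2 * (#|T|)%:R ->
  `|\sum_a u a * \sum_b v b * (g a b)%:R
      - density R g * (\sum_a u a) * (\sum_b v b)|
     <= Mu * Mv * d * (#|T|)%:R ^+ 2.
Proof.
move=> gsym qr g0 g1 Mu0 Mv0 d0 Hu Hv HN.
set γ := density R g in g0 g1 *; set N := (#|T|)%:R in HN *.
have N0 : 0 <= N by rewrite /N ler0n.
have Npos : 0 < N.
  rewrite lt_neqAle N0 andbT; apply/eqP => N0e; rewrite -N0e !mulr0 in HN; lra.
pose A a b : R := (g a b)%:R.
pose B a b := A a b - γ.
pose w a := \sum_b v b * B a b.
have E1 : \sum_a u a * \sum_b v b * (g a b)%:R - γ * (\sum_a u a) * (\sum_b v b)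
    = \sum_a u a * w a.
  have Ew : forall a, w a = \sum_b v b * A a b - γ * \sum_b v b.
    move=> a; rewrite /w mulr_sumr -sumrB; apply: eq_bigr => b _; rewrite /B; ring.
  rewrite [RHS](eq_bigr (fun a => u a * (\sum_b v b * A a b) - (γ * \sum_b v b) * u a)); last first.
    by move=> a _; rewrite Ew; ring.
  by rewrite sumrB -mulr_sumr /A; ring.
have Hdeg : forall b, `|\sum_a A a b - γ * N| <= `|eps| * γ * N.
  move=> b; have [|q1 q2] := qr [set b]; first by rewrite cards1.
  rewrite cards1 deg_eq expr1 -/N -/γ in q1 q2.
  have -> : \sum_a A a b = \sum_a ((g b a)%:R : R).
    by apply: eq_bigr => a _; rewrite /A gsym.
  have hp : 0 <= γ * N by nra.
  have he1 := ler_norm eps; have he2 := ler_norm (- eps); rewrite normrN in he2.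
  rewrite ler_norml; apply/andP; split; nra.
have Hcod : forall b b', b != b' ->
    `|\sum_a A b a * A b' a - γ ^+ 2 * N| <= `|eps| * γ ^+ 2 * N.
  move=> b b' nbb; have [|q1 q2] := qr [set b; b']; first by rewrite cards2 nbb.
  rewrite cards2 nbb codeg_eq // -/N -/γ in q1 q2.
  have hp : 0 <= γ ^+ 2 * N by rewrite mulr_ge0 // exprn_ge0.
  have he1 := ler_norm eps; have he2 := ler_norm (- eps); rewrite normrN in he2.
  rewrite ler_norml; apply/andP; split; rewrite /A; nra.
clearbody γ.
pose C b b' := \sum_a B a b * B a b'.
have A01 : forall a b, A a b = 0 \/ A a b = 1.
  by move=> a b; rewrite /A; case: (g a b); [right|left].
have HC : forall b b', `|C b b'| <= 3 * `|eps| * N + (b == b')%:R * N.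
  move=> b b'; have e0 := normr_ge0 eps.
  case: (eqVneq b b') => [<-|nbb].
    rewrite ?eqxx mul1r.
    have hC : 0 <= C b b /\ C b b <= N.
      rewrite /C /N -sumr_const; split.
        by apply: sumr_ge0 => a _; rewrite -expr2 sqr_ge0.
      apply: ler_sum => a _; rewrite /B.
      by case: (A01 a b) => ->; nra.
    rewrite ger0_norm; last by case: hC.
    case: hC => _ h; nra.
  rewrite ?(negbTE nbb) mul0r addr0.
  have EC : C b b' = (\sum_a A b a * A b' a - γ ^+ 2 * N)
      - γ * (\sum_a A a b - γ * N) - γ * (\sum_a A a b' - γ * N).
    have cN : γ ^+ 2 * N = \sum_(a : T) γ ^+ 2 by rewrite sumr_const mulr_natr.
    have cN1 : γ * N = \sum_(a : T) γ by rewrite sumr_const mulr_natr.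
    rewrite cN cN1 -!sumrB !mulr_sumr -!sumrB.
    by apply: eq_bigr => a _; rewrite /B /A (gsym b a) (gsym b' a); ring.
  rewrite EC.
  have h1 := Hcod b b' nbb; have h2 := Hdeg b; have h3 := Hdeg b'.
  set x := (\sum_a A b a * A b' a - γ ^+ 2 * N) in h1 *.
  set y := (\sum_a A a b - γ * N) in h2 *.
  set z := (\sum_a A a b' - γ * N) in h3 *.
  have t1 := ler_normD (x - γ * y) (- (γ * z)).
  have t2 := ler_normD x (- (γ * y)).
  rewrite !normrN !normrM (ger0_norm g0) in t1 t2.
  have : γ * `|y| <= γ * (`|eps| * γ * N) by rewrite ler_wpM2l.
  have : γ * `|z| <= γ * (`|eps| * γ * N) by rewrite ler_wpM2l.
  have : γ ^+ 2 <= 1 by rewrite expr_le1.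
  have : 0 <= `|eps| * N by rewrite mulr_ge0.
  nra.
have Ew2 : \sum_a w a ^+ 2 = \sum_b \sum_b' v b * v b' * C b b'.
  rewrite /w.
  under eq_bigr do rewrite expr2 mulr_suml.
  under eq_bigr do under eq_bigr do rewrite mulr_sumr.
  rewrite exchange_big /=.
  apply: eq_bigr => b _.
  rewrite exchange_big /=.
  apply: eq_bigr => b' _.
  rewrite /C mulr_sumr; apply: eq_bigr => a _; ring.
have sumN : forall x : R, \sum_(b : T) x = N * x.
  by move=> x; rewrite sumr_const -mulr_natl.
have Hw2 : \sum_a w a ^+ 2 <= Mv ^+ 2 * (N * (N * (3 * `|eps| * N) + N)).
  rewrite Ew2.
  apply: (le_trans (ler_norm _)).
  apply: (le_trans (ler_norm_sum _ _ _)).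
  have -> : N * (N * (3 * `|eps| * N) + N) = \sum_(b : T) (N * (3 * `|eps| * N) + N).
    by rewrite sumN.
  rewrite mulr_sumr; apply: ler_sum => b _.
  apply: (le_trans (ler_norm_sum _ _ _)).
  have -> : N * (3 * `|eps| * N) + N = \sum_b' (3 * `|eps| * N + (b == b')%:R * N).
    by rewrite big_split /= sum_delta sumN.
  rewrite mulr_sumr; apply: ler_sum => b' _.
  rewrite !normrM.
  have h1 := Hv b; have h2 := Hv b'; have h3 := HC b b'.
  have := normr_ge0 (v b); have := normr_ge0 (v b'); have := normr_ge0 (C b b').
  have hM : `|v b| * `|v b'| <= Mv ^+ 2.
    by rewrite expr2; apply: ler_pM.
  move=> c0 v0 v1.
  have : 0 <= `|v b| * `|v b'| by rewrite mulr_ge0.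
  nra.
rewrite E1.
set t := Mv * d * N.
have t0 : 0 < t by rewrite /t !mulr_gt0.
have Hw1 : forall a, 2 * t * `|w a| <= t ^+ 2 + w a ^+ 2.
  move=> a; have := sqr_ge0 (`|w a| - t).
  rewrite -(real_normK (num_real (w a))); nra.
have S1 : 2 * t * \sum_a `|w a| <= N * t ^+ 2 + \sum_a w a ^+ 2.
  rewrite mulr_sumr -sumN -big_split; apply: ler_sum => a _; exact: Hw1.
have S2 : \sum_a w a ^+ 2 <= N * t ^+ 2.
  apply: (le_trans Hw2); rewrite /t.
  have : N * (3 * `|eps| * N) + N <= N * (d ^+ 2 * N) by nra.
  have : 0 <= Mv ^+ 2 by apply: sqr_ge0.
  nra.
have S3 : \sum_a `|w a| <= N * t by nra.
apply: (le_trans (ler_norm_sum _ _ _)).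
apply: (@le_trans _ _ (\sum_a Mu * `|w a|)).
  apply: ler_sum => a _; rewrite normrM; apply: ler_wpM2r => //.
rewrite -mulr_sumr.
have : Mu * \sum_a `|w a| <= Mu * (N * t) by apply: ler_wpM2l.
rewrite /t; nra.
Qed.

End Disc.
Section Help.
Variables (R : realFieldType) (T P : finType).

Lemma lift (f : P -> T) (X : {set P}) (h : P -> R) (F : T -> R) :
  \sum_a (\sum_(x in X) (f x == a)%:R * h x) * F a
    = \sum_(x in X) h x * F (f x).
Proof.
under eq_bigr do rewrite mulr_suml.
rewrite exchange_big /=; apply: eq_bigr => x _.
rewrite (bigD1 (f x)) //= eqxx mul1r big1 ?addr0 // => a na.
by rewrite eq_sym (negbTE na) !mul0r.
Qed.

Lemma lift_sum (f : P -> T) (X : {set P}) (h : P -> R) :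
  \sum_a (\sum_(x in X) (f x == a)%:R * h x) = \sum_(x in X) h x.
Proof.
have := lift f X h (fun _ => 1).
under eq_bigr do rewrite mulr1.
by under [X in _ = X -> _]eq_bigr do rewrite mulr1.
Qed.

Lemma lift_bound (f : P -> T) (X : {set P}) (h : P -> R) (M : R) :
  {in X &, injective f} -> 0 <= M -> (forall x, x \in X -> `|h x| <= M) ->
  forall a, `|\sum_(x in X) (f x == a)%:R * h x| <= M.
Proof.
move=> inj M0 hM a.
case: (pickP [pred x in X | f x == a]) => [x0 /andP[x0X /eqP fx0] | none].
  rewrite (bigD1 x0) //= fx0 eqxx mul1r big1 ?addr0; first exact: hM.
  move=> x /andP[xX nx]; case: eqP => [fxa|]; last by rewrite mul0r.
  by move: nx; rewrite (inj x x0 xX x0X) ?eqxx // fxa fx0.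
rewrite big1 ?normr0 // => x xX.
by have := none x; rewrite /= xX /= => ->; rewrite mul0r.
Qed.

End Help.

Lemma inj_fst (T : finType) (X : {set T * T}) : disjoint_pairs X -> {in X &, injective fst}.
Proof.
move=> [_ H] p q pX qX e; apply/eqP; apply: contraT => npq.
have := H p q pX qX npq; rewrite -setI_eq0 => /eqP/setP/(_ p.1).
by rewrite !inE eqxx e eqxx.
Qed.

Lemma inj_snd (T : finType) (X : {set T * T}) : disjoint_pairs X -> {in X &, injective snd}.
Proof.
move=> [_ H] p q pX qX e; apply/eqP; apply: contraT => npq.
have := H p q pX qX npq; rewrite -setI_eq0 => /eqP/setP/(_ p.2).
by rewrite !inE eqxx e eqxx !orbT.
Qed.

Lemma card_le (T : finType) (X : {set T * T}) : disjoint_pairs X -> (#|X| <= #|T|)%N.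
Proof.
move=> H; rewrite -(card_in_imset (@inj_fst _ _ H)); exact: max_card.
Qed.

Lemma sum_triple (R : realFieldType) (A B C : finType) (F : (A * B) * C -> R) :
  \sum_t F t = \sum_x \sum_y \sum_z F ((x, y), z).
Proof.
transitivity (\sum_(p : A * B) \sum_z F (p, z)).
  symmetry; etransitivity; first exact: (pair_bigA _ (fun p z => F (p, z))).
  by rewrite (eq_bigr F) // => -[p z].
symmetry; etransitivity; first exact: (pair_bigA _ (fun x y => \sum_z F ((x, y), z))).
by apply: eq_bigr => -[x y].
Qed.

Lemma Tcount (R : realFieldType) (V : finType) (g : rel V) (X Y Z : {set V * V}) :
  ((triple_count g X Y Z)%:R : R) =
  \sum_(z in Z) \sum_(x in X) \sum_(y in Y)
     (g z.1 x.2)%:R * (g x.1 y.2)%:R * (g y.1 z.2)%:R.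
Proof.
rewrite /triple_count card_sum sum_triple /=.
under eq_bigr do rewrite exchange_big /=.
rewrite exchange_big /=.
rewrite [RHS]big_mkcond; apply: eq_bigr => z _.
case zZ: (z \in Z); last first.
  by rewrite big1 // => x _; rewrite big1 // => y _ /=; rewrite !andbF.
rewrite [RHS]big_mkcond; apply: eq_bigr => x _.
case xX: (x \in X); last first.
  by rewrite big1.
rewrite [RHS]big_mkcond; apply: eq_bigr => y _.
case yY: (y \in Y) => //=.
by case: (g x.1 y.2); case: (g y.1 z.2); case: (g z.1 x.2); rewrite /= ?mulr0 ?mul0r ?mulr1.
Qed.

Lemma main_fin (R : realFieldType) (V : finType) (g : rel V) (eps d : R)
    (X Y Z : {set V * V}) :
  symmetric g -> quasirandom g eps 2 -> 0 <= density R g -> density R g <= 1 ->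
  0 < d -> disjoint_pairs X -> disjoint_pairs Y -> disjoint_pairs Z ->
  3 * `|eps| * (#|V|)%:R + 1 <= d ^+ 2 * (#|V|)%:R ->
  density R g ^+ 3 * (#|X|)%:R * (#|Y|)%:R * (#|Z|)%:R - 3 * d * (#|V|)%:R ^+ 3
    <= ((triple_count g X Y Z)%:R : R).
Proof.
move=> gsym qr g0 g1 d0 dX dY dZ HN.
set γ := density R g in g0 g1 *; set N := (#|V|)%:R in HN *.
pose A a b : R := (g a b)%:R.
have A01 : forall a b, 0 <= A a b <= 1.
  by move=> a b; rewrite /A; case: (g a b); rewrite /= ?ler01 ?lexx.
have cX : (#|X|)%:R <= N by rewrite /N ler_nat card_le.
have cY : (#|Y|)%:R <= N by rewrite /N ler_nat card_le.
have cZ : (#|Z|)%:R <= N by rewrite /N ler_nat card_le.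
have N0 : 0 <= N by rewrite /N ler0n.
pose p (z : V * V) := \sum_(x in X) A z.1 x.2.
pose q (z : V * V) := \sum_(y in Y) A y.1 z.2.
pose S (z : V * V) := \sum_(x in X) \sum_(y in Y) A z.1 x.2 * A x.1 y.2 * A y.1 z.2.
have St1 : forall z, `|S z - γ * p z * q z| <= d * N ^+ 2.
  move=> z.
  pose u a := \sum_(x in X) (x.1 == a)%:R * A z.1 x.2.
  pose v b := \sum_(y in Y) (y.2 == b)%:R * A y.1 z.2.
  have hu : forall a, `|u a| <= 1.
    apply: lift_bound; [exact: inj_fst | exact: ler01 |].
    by move=> x _; case/andP: (A01 z.1 x.2) => a0 a1; rewrite ger0_norm.
  have hv : forall b, `|v b| <= 1.
    apply: lift_bound; [exact: inj_snd | exact: ler01 |].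
    by move=> y _; case/andP: (A01 y.1 z.2) => a0 a1; rewrite ger0_norm.
  have := @disc R V g eps d 1 1 u v gsym qr g0 g1 ler01 ltr01 d0 hu hv HN.
  rewrite -/γ -/N !mul1r.
  rewrite /u /v lift_sum lift_sum -/(p z) -/(q z) lift.
  suff -> : \sum_(x in X) A z.1 x.2 *
       \sum_b (\sum_(y in Y) (y.2 == b)%:R * A y.1 z.2) * (g x.1 b)%:R = S z by [].
  apply: eq_bigr => x _.
  have L := @lift R V _ snd Y (fun y => A y.1 z.2) (fun b => (g x.1 b)%:R).
  rewrite /= in L; rewrite L mulr_sumr; apply: eq_bigr => y _; rewrite /A; ring.
have Sum1 : `|\sum_(z in Z) S z - γ * \sum_(z in Z) p z * q z| <= d * N ^+ 3.
  rewrite mulr_sumr -sumrB.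
  apply: (le_trans (ler_norm_sum _ _ _)).
  apply: (@le_trans _ _ (\sum_(z in Z) d * N ^+ 2)).
    by apply: ler_sum => z _; rewrite mulrA; exact: St1.
  rewrite sumr_const -mulr_natr.
  have : 0 <= d * N ^+ 2 by rewrite mulr_ge0 ?exprn_ge0 // ltW.
  rewrite [N ^+ 3]exprS; nra.
have hone : forall (W : {set V * V}) (F : V * V -> R),
    (forall x, x \in W -> 0 <= F x <= 1) ->
    0 <= \sum_(x in W) F x <= (#|W|)%:R.
  move=> W F HF; apply/andP; split.
    by apply: sumr_ge0 => x xW; case/andP: (HF x xW).
  rewrite -sum1_card natr_sum; apply: ler_sum => x xW; by case/andP: (HF x xW).
pose Q := \sum_(z in Z) q z.
have St2 : `|\sum_(z in Z) p z * q z - γ * Q * (#|X|)%:R| <= (#|Y|)%:R * d * N ^+ 2.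
  pose u a := \sum_(z in Z) (z.1 == a)%:R * q z.
  pose v b := \sum_(x in X) (x.2 == b)%:R * (1 : R).
  have hu : forall a, `|u a| <= (#|Y|)%:R.
    apply: lift_bound; [exact: inj_fst | exact: ler0n |].
    move=> z _; have /andP[q0 q1] := hone Y (fun y => A y.1 z.2) (fun y _ => A01 y.1 z.2).
    by rewrite ger0_norm.
  have hv : forall b, `|v b| <= 1.
    apply: lift_bound; [exact: inj_snd | exact: ler01 |].
    by move=> y _; rewrite normr1.
  have := @disc R V g eps d _ 1 u v gsym qr g0 g1 (ler0n _ _) ltr01 d0 hu hv HN.
  rewrite -/γ -/N mulr1.
  rewrite /u /v lift_sum lift_sum -/Q sumr_const lift.
  suff -> : \sum_(x in Z) q x *
       \sum_b (\sum_(y in X) (y.2 == b)%:R * 1) * (g x.1 b)%:R = \sum_(z in Z) p z * q z by [].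
  apply: eq_bigr => z _.
  have L := @lift R V _ snd X (fun _ => 1) (fun b => (g z.1 b)%:R).
  rewrite /= in L; rewrite L mulrC; congr (_ * _); apply: eq_bigr => x _; rewrite mul1r.
  by [].
have St3 : `|Q - γ * (#|Y|)%:R * (#|Z|)%:R| <= d * N ^+ 2.
  pose u a := \sum_(y in Y) (y.1 == a)%:R * (1 : R).
  pose v b := \sum_(z in Z) (z.2 == b)%:R * (1 : R).
  have hu : forall a, `|u a| <= 1.
    apply: lift_bound; [exact: inj_fst | exact: ler01 |].
    by move=> y _; rewrite normr1.
  have hv : forall b, `|v b| <= 1.
    apply: lift_bound; [exact: inj_snd | exact: ler01 |].
    by move=> y _; rewrite normr1.
  have := @disc R V g eps d 1 1 u v gsym qr g0 g1 ler01 ltr01 d0 hu hv HN.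
  rewrite -/γ -/N !mul1r.
  rewrite /u /v lift_sum lift_sum !sumr_const lift.
  suff -> : \sum_(x in Y) 1 *
       \sum_b (\sum_(y in Z) (y.2 == b)%:R * 1) * (g x.1 b)%:R = Q by [].
  rewrite /Q /q exchange_big /=; apply: eq_bigr => y _.
  have L := @lift R V _ snd Z (fun _ => 1) (fun b => (g y.1 b)%:R).
  rewrite /= in L; rewrite L mul1r; apply: eq_bigr => z _; rewrite mul1r.
  by [].
rewrite Tcount -/A.
have -> : \sum_(z in Z) \sum_(x in X) \sum_(y in Y) A z.1 x.2 * A x.1 y.2 * A y.1 z.2
   = \sum_(z in Z) S z by [].
set T0 := \sum_(z in Z) S z in Sum1 *.
set P0 := \sum_(z in Z) p z * q z in Sum1 St2.
set x := (#|X|)%:R in cX St2 *; set y := (#|Y|)%:R in cY St2 St3 *.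
set z := (#|Z|)%:R in cZ St3 *.
have x0 : 0 <= x by rewrite /x ler0n.
have y0 : 0 <= y by rewrite /y ler0n.
have z0 : 0 <= z by rewrite /z ler0n.
move: Sum1 St2 St3; rewrite !ler_norml => /andP[s1 _] /andP[s2 _] /andP[s3 _].
have e3 : γ * x * (γ * y * z - d * N ^+ 2) <= γ * x * Q.
  by apply: ler_wpM2l; [rewrite mulr_ge0 | lra].
have e2 : γ * (γ * Q * x - y * d * N ^+ 2) <= γ * P0.
  by apply: ler_wpM2l => //; lra.
have f1 : γ ^+ 2 * x <= N.
  have : γ ^+ 2 <= 1 by rewrite expr_le1.
  have : 0 <= γ ^+ 2 by rewrite sqr_ge0.
  nra.
have f2 : γ * y <= N by nra.
have dN : 0 <= d * N ^+ 2 by rewrite mulr_ge0 ?exprn_ge0 // ltW.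
have f1' : γ ^+ 2 * x * (d * N ^+ 2) <= N * (d * N ^+ 2) by rewrite ler_wpM2r.
have f2' : γ * y * (d * N ^+ 2) <= N * (d * N ^+ 2) by rewrite ler_wpM2r.
rewrite !exprS expr0 mulr1 in f1 f1' dN s1 *.
nra.
Qed.

Theorem lemma5p7 (R : realType)
    (G : forall n : nat, rel 'I_n) (eps : nat -> R)
    (X Y Z : forall n : nat, {set 'I_n * 'I_n}) :
  (forall n, simple_graph (G n)) ->
  (forall n, quasirandom (G n) (eps n) 2) ->
  (* eps_n = o(1) *)
  (forall e : R, 0 < e -> exists N : nat, forall n, (N <= n)%N -> `|eps n| <= e) ->
  (forall n, disjoint_pairs (X n) /\ disjoint_pairs (Y n) /\ disjoint_pairs (Z n)) ->
  (* gamma = Omega(1), 1 - gamma = Omega(1), |X|,|Y|,|Z| = Omega(n) *)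
  (exists c : R, 0 < c /\ exists N0 : nat, forall n, (N0 <= n)%N ->
     [/\ c <= density R (G n), c <= 1 - density R (G n),
         c * n%:R <= (#|X n|)%:R, c * n%:R <= (#|Y n|)%:R
       & c * n%:R <= (#|Z n|)%:R]) ->
  (* count >= gamma^3 |X||Y||Z|/8 - o(n^3) *)
  forall delta : R, 0 < delta -> exists N : nat, forall n, (N <= n)%N ->
    density R (G n) ^+ 3 * (#|X n|)%:R * (#|Y n|)%:R * (#|Z n|)%:R / 8
      - delta * n%:R ^+ 3
    <= (triple_count (G n) (X n) (Y n) (Z n))%:R.
Proof.
move=> Hsimp Hqr Heps Hdisj [c [c0 [N0 Hc]]] delta dpos.
pose d := delta / 3.
have d0 : 0 < d by rewrite /d divr_gt0.
have d20 : 0 < d ^+ 2 by rewrite exprn_gt0.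
have [N1 HN1] := Heps (d ^+ 2 / 6) (divr_gt0 d20 (ltr0n _ 6)).
have hb : 0 <= 2 / d ^+ 2 by rewrite divr_ge0 // ltW.
pose N2 := Num.Def.archi_bound (2 / d ^+ 2).
have HN2 := archi_boundP hb.
exists (maxn N0 (maxn N1 N2)) => n Hn.
rewrite !geq_max in Hn; case/and3P: Hn => Hn0 Hn1 Hn2.
have [cg c1g _ _ _] := Hc n Hn0.
have ep := HN1 n Hn1.
have nb : 2 / d ^+ 2 < n%:R.
  by apply: (lt_le_trans HN2); rewrite ler_nat.
have nb' : 2 < d ^+ 2 * n%:R.
  have e : 2 / d ^+ 2 * d ^+ 2 = 2 by rewrite mulfVK // gt_eqF.
  nra.
have [dX [dY dZ]] := Hdisj n.
have n0 : 0 <= n%:R :> R by rewrite ler0n.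
have HN : 3 * `|eps n| * (#|'I_n|)%:R + 1 <= d ^+ 2 * (#|'I_n|)%:R.
  rewrite card_ord; nra.
have g0 : 0 <= density R (G n) by apply: le_trans (ltW c0) cg.
have g1 : density R (G n) <= 1 by lra.
have := @main_fin R 'I_n (G n) (eps n) d (X n) (Y n) (Z n) (Hsimp n).1 (Hqr n) g0 g1 d0 dX dY dZ HN.
rewrite card_ord /d.
set T0 := (triple_count _ _ _ _)%:R.
have : 0 <= density R (G n) ^+ 3 * (#|X n|)%:R * (#|Y n|)%:R * (#|Z n|)%:R.
  apply: mulr_ge0; [apply: mulr_ge0; [apply: mulr_ge0; [exact: exprn_ge0|]|]|]; exact: ler0n.
move=> K0 H.
have e : 3 * (delta / 3) * n%:R ^+ 3 = delta * n%:R ^+ 3 :> R by field.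
rewrite e in H.
lra.
Qed.
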